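(* Let $G$ be a group and let $S=\bigoplus_{g\in G}S_g$ be an epsilon-finitely $G$-graded ring. Then for every normal subgroup $N$ of $G$, the induced $G/N$-grading $\{S_C\}_{C\in G/N}$ is epsilon-finite (in particular epsilon-strong).
   Context: Rings are associative, not necessarily unital; $AB$ denotes finite sums of products. A grading $\{T_h\}_{h\in H}$ of a ring $T$ ($T=\bigoplus_hT_h$, $T_hT_k\subseteq T_{hk}$) is epsilon-strong if $T_hT_{h^{-1}}T_h=T_h$ for all $h$ and each ring $T_hT_{h^{-1}}$ has a multiplicative identity element $\epsilon_h$ (these are commuting idempotents). It is epsilon-finite if it is epsilon-strong and the set $\bigvee\{\epsilon_h\mid h\in H\}$ is finite, where for commuting idempotents $a\vee b=a+b-ab$ and $\bigvee F$ denotes the set of finite joins of elements of $F$. Induced grading: $S_C=\bigoplus_{g\in C}S_g$. *)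

(* Defs.v *)
(* the additive group of the ring is a zmodType; the
   (not necessarily unital) multiplication is an explicit binary operation. *)
From mathcomp Require Import all_boot all_algebra.
From Stdlib Require List.
Set Implicit Arguments. Unset Strict Implicit. Unset Printing Implicit Defensive.
Import GRing.Theory.
Local Open Scope ring_scope.

Section Defs.
Variable T : zmodType.
Variable mul : T -> T -> T.

Definition prodset (A B : T -> Prop) : T -> Prop :=
  fun x => exists l : seq (T * T),
    List.Forall (fun p => A p.1 /\ B p.2) l /\ x = \sum_(p <- l) mul p.1 p.2.

Definition set_eq (A B : T -> Prop) : Prop := forall x, A x <-> B x.

Definition is_identity_of (A : T -> Prop) (e : T) : Prop :=
  A e /\ forall x, A x -> mul e x = x /\ mul x e = x.

Definition cjoin (a b : T) : T := a + b - mul a b.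

Inductive joins (E : T -> Prop) : T -> Prop :=
| joins_base x : E x -> joins E x
| joins_join a b : joins E a -> joins E b -> joins E (cjoin a b).

Definition finite_set (A : T -> Prop) : Prop :=
  exists L : seq T, forall x, A x -> x \in L.

Variable H : Type.
Variable hmul : H -> H -> H.
Variable hinv : H -> H.
Variable Idx : H -> Prop.   (* the elements of the grading group *)
Variable S : H -> T -> Prop.

Definition is_grading : Prop :=
  (forall h, Idx h -> S h 0 /\ (forall x y, S h x -> S h y -> S h (x - y)))
  /\ (forall s, exists l : seq (H * T),
        List.Forall (fun p => Idx p.1 /\ S p.1 p.2) l /\ s = \sum_(p <- l) p.2)
  /\ (forall l : seq (H * T),
        List.Forall (fun p => Idx p.1 /\ S p.1 p.2) l ->
        List.NoDup (map fst l) ->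
        \sum_(p <- l) p.2 = 0 -> List.Forall (fun p => p.2 = 0) l)
  /\ (forall h k x y, Idx h -> Idx k -> S h x -> S k y -> S (hmul h k) (mul x y)).

Definition epsilon_strong : Prop :=
  is_grading /\
  forall h, Idx h ->
    set_eq (prodset (prodset (S h) (S (hinv h))) (S h)) (S h) /\
    exists e, is_identity_of (prodset (S h) (S (hinv h))) e.

Definition epsilons : T -> Prop :=
  fun e => exists h, Idx h /\ is_identity_of (prodset (S h) (S (hinv h))) e.

Definition epsilon_finite : Prop :=
  epsilon_strong /\ finite_set (joins epsilons).

End Defs.

Section Groups.
Variable G : Type.
Variable gmul : G -> G -> G.
Variable ginv : G -> G.
Variable g1 : G.

Definition is_group : Prop :=
  (forall a b c, gmul a (gmul b c) = gmul (gmul a b) c) /\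
  (forall a, gmul g1 a = a /\ gmul a g1 = a) /\
  (forall a, gmul (ginv a) a = g1 /\ gmul a (ginv a) = g1).

Definition normal_subgroup (N : G -> Prop) : Prop :=
  N g1 /\ (forall a b, N a -> N b -> N (gmul a b)) /\ (forall a, N a -> N (ginv a))
  /\ (forall a g, N a -> N (gmul (gmul g a) (ginv g))).

(* G/N: cosets gN, viewed as subsets of G *)
Definition is_coset (N : G -> Prop) (C : G -> Prop) : Prop :=
  exists g, C = (fun x => N (gmul (ginv g) x)).

Definition setmul (C D : G -> Prop) : G -> Prop :=
  fun x => exists a b, C a /\ D b /\ x = gmul a b.

Definition setinv (C : G -> Prop) : G -> Prop := fun x => C (ginv x).
End Groups.

Definition induced {T : zmodType} {G : Type} (S : G -> T -> Prop)
  (C : G -> Prop) : T -> Prop :=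
  fun s => exists l : seq (G * T),
    List.Forall (fun p => C p.1 /\ S p.1 p.2) l /\ s = \sum_(p <- l) p.2.

Definition is_ring_mul {T : zmodType} (mul : T -> T -> T) : Prop :=
  (forall a b c, mul a (mul b c) = mul (mul a b) c) /\
  (forall a b c, mul (a + b) c = mul a c + mul b c) /\
  (forall a b c, mul a (b + c) = mul a b + mul a c).

(* Main.v *)
Require Import Defs.
From mathcomp Require Import all_boot all_algebra.
From Stdlib Require Import Classical ClassicalDescription FunctionalExtensionality PropExtensionality.
From Stdlib Require List.
Set Implicit Arguments. Unset Strict Implicit. Unset Printing Implicit Defensive.
Import GRing.Theory.
Local Open Scope ring_scope.

Section RingL.
Variable T : zmodType.
Variable mul : T -> T -> T.
Hypothesis Hmul : is_ring_mul mul.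

Lemma mA a b c : mul a (mul b c) = mul (mul a b) c.
Proof. by case: Hmul. Qed.
Lemma mDl a b c : mul (a + b) c = mul a c + mul b c.
Proof. by case: Hmul => _ []. Qed.
Lemma mDr a b c : mul a (b + c) = mul a b + mul a c.
Proof. by case: Hmul => _ []. Qed.
Lemma m0l a : mul 0 a = 0.
Proof. have h := mDl 0 0 a; rewrite addr0 in h. by apply: (addrI (mul 0 a)); rewrite addr0 -h. Qed.
Lemma m0r a : mul a 0 = 0.
Proof. have h := mDr a 0 0; rewrite addr0 in h. by apply: (addrI (mul a 0)); rewrite addr0 -h. Qed.
Lemma mNl a b : mul (- a) b = - mul a b.
Proof. apply/eqP; rewrite -subr_eq0 opprK -mDl addNr m0l //. Qed.
Lemma mNr a b : mul a (- b) = - mul a b.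
Proof. apply/eqP; rewrite -subr_eq0 opprK -mDr addNr m0r //. Qed.
Lemma mBl a b c : mul (a - b) c = mul a c - mul b c.
Proof. by rewrite mDl mNl. Qed.
Lemma mBr a b c : mul a (b - c) = mul a b - mul a c.
Proof. by rewrite mDr mNr. Qed.

Lemma Forall_sum_ind (I : Type) (Q : I -> Prop) (F : I -> T) (P : T -> Prop) (l : seq I) :
  P 0 -> (forall x y, P x -> P y -> P (x + y)) -> (forall i, Q i -> P (F i)) ->
  List.Forall Q l -> P (\sum_(i <- l) F i).
Proof.
move=> P0 PD PF; elim: l => [|i l IH] H; first by rewrite big_nil.
inversion H; subst; rewrite big_cons; apply: PD; auto.
Qed.

Lemma prodset_ind (A B P : T -> Prop) x :
  P 0 -> (forall x y, P x -> P y -> P (x + y)) -> (forall a b, A a -> B b -> P (mul a b)) ->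
  prodset mul A B x -> P x.
Proof.
move=> P0 PD PF [l [Hl ->]].
apply: (Forall_sum_ind (Q := fun p => A p.1 /\ B p.2)) => //.
by move=> i [? ?]; apply: PF.
Qed.

Lemma prodset_0 A B : prodset mul A B 0.
Proof. by exists [::]; split => //; rewrite big_nil. Qed.
Lemma prodset_add A B x y : prodset mul A B x -> prodset mul A B y -> prodset mul A B (x + y).
Proof.
move=> [l1 [H1 ->]] [l2 [H2 ->]]; exists (l1 ++ l2); split.
  by apply/List.Forall_app.
by rewrite big_cat.
Qed.
Lemma prodset_mul (A B : T -> Prop) a b : A a -> B b -> prodset mul A B (mul a b).
Proof. by move=> Ha Hb; exists [:: (a, b)]; split; [constructor|rewrite big_seq1]. Qed.
Lemma prodset_mono (A B A' B' : T -> Prop) x :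
  (forall a, A a -> A' a) -> (forall b, B b -> B' b) -> prodset mul A B x -> prodset mul A' B' x.
Proof.
move=> HA HB; apply: prodset_ind; [exact: prodset_0|exact: prodset_add|].
by move=> a b Ha Hb; apply: prodset_mul; auto.
Qed.
Lemma prodset_opp (A B : T -> Prop) x : (forall a, A a -> A (- a)) ->
  prodset mul A B x -> prodset mul A B (- x).
Proof.
move=> HA; apply: (prodset_ind (P := fun x => prodset mul A B (- x))).
- by rewrite oppr0; apply: prodset_0.
- by move=> u v Hu Hv; rewrite opprD; apply: prodset_add.
- by move=> a b Ha Hb; rewrite -mNl; apply: prodset_mul; auto.
Qed.

Lemma mul_sum_l (I : Type) (l : seq I) (F : I -> T) c :
  mul (\sum_(i <- l) F i) c = \sum_(i <- l) mul (F i) c.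
Proof. elim: l => [|i l IH]; rewrite ?big_nil ?m0l // !big_cons mDl IH //. Qed.

Lemma ident_uniq A e e' : is_identity_of mul A e -> is_identity_of mul A e' -> e = e'.
Proof.
move=> [He He1] [He' He1'].
have [h1 _] := He1 _ He'. have [_ h2] := He1' _ He.
by rewrite -h1 h2.
Qed.

End RingL.
Set Implicit Arguments. Unset Strict Implicit. Unset Printing Implicit Defensive.

Section Grp.
Variable G : Type.
Variable gmul : G -> G -> G.
Variable ginv : G -> G.
Variable g1 : G.
Hypothesis HG : is_group gmul ginv g1.
Local Notation "a * b" := (gmul a b).

Lemma gA a b c : a * (b * c) = (a * b) * c.
Proof. by case: HG. Qed.
Lemma g1l a : g1 * a = a.
Proof. by case: HG => _ [h _]; case: (h a). Qed.
Lemma g1r a : a * g1 = a.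
Proof. by case: HG => _ [h _]; case: (h a). Qed.
Lemma gVl a : ginv a * a = g1.
Proof. by case: HG => _ [_ h]; case: (h a). Qed.
Lemma gVr a : a * ginv a = g1.
Proof. by case: HG => _ [_ h]; case: (h a). Qed.
Lemma ginv_uniq x y : x * y = g1 -> x = ginv y.
Proof. move=> h; by rewrite -(g1r x) -(gVr y) gA h g1l. Qed.
Lemma ginvK a : ginv (ginv a) = a.
Proof. by symmetry; apply: ginv_uniq; rewrite gVr. Qed.
Lemma ginvM a b : ginv (a * b) = ginv b * ginv a.
Proof.
symmetry; apply: ginv_uniq.
by rewrite -gA (gA (ginv a)) gVl g1l gVl.
Qed.
Lemma gcancel x y z : (x * y) * (ginv y * z) = x * z.
Proof. by rewrite -gA (gA y) gVr g1l. Qed.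

Variable N : G -> Prop.
Hypothesis HN : normal_subgroup gmul ginv g1 N.

Lemma N1 : N g1. Proof. by case: HN. Qed.
Lemma NM a b : N a -> N b -> N (a * b). Proof. by case: HN => _ [h _]; apply: h. Qed.
Lemma NV a : N a -> N (ginv a). Proof. by case: HN => _ [_ [h _]]; apply: h. Qed.

Lemma coset_eq g g' h : N (ginv g * h) -> N (ginv g' * h) ->
  (fun x => N (ginv g * x)) = (fun x => N (ginv g' * x)).
Proof.
have key : forall g g', N (ginv g * h) -> N (ginv g' * h) -> forall x,
    N (ginv g' * x) -> N (ginv g * x).
  move=> u v Hu Hv x Hx.
  have Huv : N (ginv u * v).
    have := NM Hu (NV Hv); by rewrite ginvM ginvK gcancel.
  have := NM Huv Hx; by rewrite gcancel.
move=> H1 H2; apply: functional_extensionality => x.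
apply: propositional_extensionality; split; apply: key => //.
Qed.

Lemma coset_triple g a b c : N (ginv g * a) -> N (ginv g * ginv b) -> N (ginv g * c) ->
  N (ginv g * ((a * b) * c)).
Proof.
move=> Ha Hb Hc.
have h1 := NM Ha (NV Hb); rewrite ginvM !ginvK gA in h1.
have := NM h1 Hc; rewrite gcancel.
by rewrite !gA.
Qed.

Lemma coset_disj (C C' : G -> Prop) h : is_coset gmul ginv N C -> is_coset gmul ginv N C' ->
  C h -> C' h -> C = C'.
Proof.
move=> [g ->] [g' ->] H1 H2; exact: coset_eq H1 H2.
Qed.
End Grp.
Set Implicit Arguments. Unset Strict Implicit. Unset Printing Implicit Defensive.

Section Grad.
Variable G : Type.
Variable gmul : G -> G -> G.
Variable ginv : G -> G.
Variable g1 : G.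
Hypothesis HG : is_group gmul ginv g1.
Variable T : zmodType.
Variable mul : T -> T -> T.
Hypothesis Hmul : is_ring_mul mul.
Variable S : G -> T -> Prop.
Hypothesis HS : epsilon_finite mul gmul ginv (fun _ => True) S.

Local Notation I h := (prodset mul (S h) (S (ginv h))).

Lemma Sz h : S h 0.
Proof. by case: HS => [[[H _] _] _]; case: (H h). Qed.
Lemma Ssub h x y : S h x -> S h y -> S h (x - y).
Proof. by case: HS => [[[H _] _] _]; case: (H h) => // _; apply. Qed.
Lemma Sopp h x : S h x -> S h (- x).
Proof. by move=> Hx; rewrite -sub0r; apply: Ssub => //; apply: Sz. Qed.
Lemma Sadd h x y : S h x -> S h y -> S h (x + y).
Proof. by move=> Hx Hy; rewrite -(opprK y); apply: Ssub => //; apply: Sopp. Qed.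
Lemma Sdec s : exists l : seq (G * T),
        List.Forall (fun p => True /\ S p.1 p.2) l /\ s = \sum_(p <- l) p.2.
Proof. by case: HS => [[[_ [H _]] _] _]. Qed.
Lemma Sind (l : seq (G * T)) :
        List.Forall (fun p => True /\ S p.1 p.2) l ->
        List.NoDup (map fst l) ->
        \sum_(p <- l) p.2 = 0 -> List.Forall (fun p => p.2 = 0) l.
Proof. by case: HS => [[[_ [_ [H _]]] _] _]; apply: H. Qed.
Lemma Smul h k x y : S h x -> S k y -> S (gmul h k) (mul x y).
Proof. by case: HS => [[[_ [_ [_ H]]] _] _] Hx Hy; apply: H. Qed.
Lemma Sstrong h : set_eq (prodset mul (prodset mul (S h) (S (ginv h))) (S h)) (S h).
Proof. by case: HS => [[_ H] _]; case: (H h). Qed.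
Lemma Sid h : exists e, is_identity_of mul (I h) e.
Proof. by case: HS => [[_ H] _]; case: (H h). Qed.
Lemma Sfin : finite_set (joins mul (epsilons mul ginv (fun _ => True) S)).
Proof. by case: HS. Qed.

Lemma S_sum (h : G) (I0 : Type) (Q : I0 -> Prop) (F : I0 -> T) (l : seq I0) :
  (forall i, Q i -> S h (F i)) -> List.Forall Q l -> S h (\sum_(i <- l) F i).
Proof.
move=> HF; apply: Forall_sum_ind => //; [exact: Sz|exact: Sadd].
Qed.

Lemma I_e h x : I h x -> S g1 x.
Proof.
apply: prodset_ind => //; [exact: Sz|exact: Sadd|].
by move=> a b Ha Hb; rewrite -(gVr HG h); apply: Smul.
Qed.

Lemma I_left h a x : S g1 a -> I h x -> I h (mul a x).
Proof.
move=> Ha; apply: (prodset_ind (P := fun x => I h (mul a x))).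
- by rewrite m0r //; apply: prodset_0.
- by move=> u v Hu Hv; rewrite mDr //; apply: prodset_add.
- move=> u v Hu Hv; rewrite mA //; apply: prodset_mul => //.
  by rewrite -(g1l HG h); apply: Smul.
Qed.

Lemma I_right h a x : S g1 a -> I h x -> I h (mul x a).
Proof.
move=> Ha; apply: (prodset_ind (P := fun x => I h (mul x a))).
- by rewrite m0l //; apply: prodset_0.
- by move=> u v Hu Hv; rewrite mDl //; apply: prodset_add.
- move=> u v Hu Hv; rewrite -mA //; apply: prodset_mul => //.
  by rewrite -(g1r HG (ginv h)); apply: Smul.
Qed.

Lemma F1 h e s : is_identity_of mul (I h) e -> S h s -> mul e s = s.
Proof.
move=> [He Hid] /(Sstrong h).
apply: (prodset_ind (P := fun x => mul e x = x)).
- exact: m0r.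
- by move=> u v Hu Hv; rewrite mDr // Hu Hv.
- by move=> a b Ha Hb; rewrite mA //; case: (Hid a Ha) => ->.
Qed.

Lemma F2 h e s : is_identity_of mul (I (ginv h)) e -> S h s -> mul s e = s.
Proof.
move=> [He Hid] /(Sstrong h).
apply: (prodset_ind (P := fun x => mul x e = x)).
- exact: m0l.
- by move=> u v Hu Hv; rewrite mDl // Hu Hv.
move=> a b Ha Hb.
move: Ha; apply: (prodset_ind (P := fun a => mul (mul a b) e = mul a b)).
- by rewrite !m0l.
- by move=> u v Hu Hv; rewrite !mDl // Hu Hv.
move=> x y Hx Hy.
rewrite -!mA //.
have Hyb : I (ginv h) (mul y b).
  by apply: prodset_mul => //; rewrite (ginvK HG).
rewrite (mA Hmul y b e); by case: (Hid _ Hyb) => _ ->.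
Qed.

Definition CI x := S g1 x /\ mul x x = x /\ forall a, S g1 a -> mul x a = mul a x.

Lemma eps_CI h e : is_identity_of mul (I h) e -> CI e.
Proof.
move=> [He Hid]; have He1 := I_e He.
split => //; split; first by case: (Hid _ He).
move=> a Ha.
have h1 := I_left Ha He; have h2 := I_right Ha He.
case: (Hid _ h1) => E1 _; case: (Hid _ h2) => _ E2.
by rewrite -E1 mA // E2.
Qed.

Lemma S1mul x y : S g1 x -> S g1 y -> S g1 (mul x y).
Proof. by move=> Hx Hy; rewrite -(g1l HG g1); apply: Smul. Qed.

Lemma cjoin_CI a b : CI a -> CI b ->
  [/\ CI (cjoin mul a b), mul (cjoin mul a b) a = a & mul (cjoin mul a b) b = b].
Proof.
move=> [Sa [aa ca]] [Sb [bb cb]].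
have Sab := S1mul Sa Sb.
have ba : mul b a = mul a b by rewrite cb.
have ja : mul (cjoin mul a b) a = a.
  rewrite /cjoin mBl // mDl // aa ba -(mA Hmul a b a) ba (mA Hmul a a b) aa.
  by rewrite addrK.
have jb : mul (cjoin mul a b) b = b.
  by rewrite /cjoin mBl // mDl // bb -(mA Hmul a b b) bb [mul a b + b]addrC addrK.
have jc : mul (cjoin mul a b) (mul a b) = mul a b.
  by rewrite mA // ja.
split => //; split; first by rewrite /cjoin; apply: Ssub => //; apply: Sadd.
split.
  by rewrite {2}/cjoin mBr // mDr // ja jb jc.
move=> y Hy.
rewrite /cjoin mBl // mDl // mBr // mDr // (ca y) // (cb y) //.
by rewrite -(mA Hmul a b y) (cb y) // (mA Hmul a y b) (ca y) // (mA Hmul y a b).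
Qed.

Definition le x y := mul y x = x.
Lemma le_trans x y z : le x y -> le y z -> le x z.
Proof. rewrite /le => h1 h2; by rewrite -h1 mA // h2. Qed.

End Grad.
Set Implicit Arguments. Unset Strict Implicit. Unset Printing Implicit Defensive.

Section Ind.
Variable G : Type.
Variable gmul : G -> G -> G.
Variable ginv : G -> G.
Variable g1 : G.
Hypothesis HG : is_group gmul ginv g1.
Variable T : zmodType.
Variable mul : T -> T -> T.
Hypothesis Hmul : is_ring_mul mul.
Variable S : G -> T -> Prop.
Hypothesis HS : epsilon_finite mul gmul ginv (fun _ => True) S.

Local Notation I h := (prodset mul (S h) (S (ginv h))).

Lemma induced_ind (A : G -> Prop) (P : T -> Prop) x :
  P 0 -> (forall x y, P x -> P y -> P (x + y)) -> (forall g s, A g -> S g s -> P s) ->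
  induced S A x -> P x.
Proof.
move=> P0 PD PF [l [Hl ->]].
apply: (Forall_sum_ind (Q := fun p => A p.1 /\ S p.1 p.2)) => //.
by move=> i [? ?]; apply: (PF i.1).
Qed.

Lemma induced_0 A : induced S A 0.
Proof. by exists [::]; split => //; rewrite big_nil. Qed.
Lemma induced_add A x y : induced S A x -> induced S A y -> induced S A (x + y).
Proof.
move=> [l1 [H1 ->]] [l2 [H2 ->]]; exists (l1 ++ l2); split.
  by apply/List.Forall_app.
by rewrite big_cat.
Qed.
Lemma induced_single (A : G -> Prop) g s : A g -> S g s -> induced S A s.
Proof. by move=> Ha Hb; exists [:: (g, s)]; split; [constructor|rewrite big_seq1]. Qed.
Lemma induced_mono (A B : G -> Prop) x : (forall g, A g -> B g) -> induced S A x -> induced S B x.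
Proof.
move=> HAB; apply: induced_ind; [exact: induced_0|exact: induced_add|].
by move=> g s Ag Sg; apply: (induced_single (g := g)); auto.
Qed.
Lemma induced_opp A x : induced S A x -> induced S A (- x).
Proof.
apply: (induced_ind (P := fun x => induced S A (- x))).
- by rewrite oppr0; apply: induced_0.
- by move=> u v Hu Hv; rewrite opprD; apply: induced_add.
- by move=> g s Ag Sg; apply: (induced_single (g := g)) => //; apply: (Sopp HS).
Qed.
Lemma induced_mul (A B : G -> Prop) x y : induced S A x -> induced S B y ->
  induced S (setmul gmul A B) (mul x y).
Proof.
move=> Hx Hy; move: Hx.
apply: (induced_ind (P := fun x => induced S (setmul gmul A B) (mul x y))).
- by rewrite m0l //; apply: induced_0.
- by move=> u v Hu Hv; rewrite mDl //; apply: induced_add.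
move=> g s Ag Sg; move: Hy.
apply: (induced_ind (P := fun y => induced S (setmul gmul A B) (mul s y))).
- by rewrite m0r //; apply: induced_0.
- by move=> u v Hu Hv; rewrite mDr //; apply: induced_add.
move=> h t Bh Sh; apply: (induced_single (g := gmul g h)).
  by exists g, h.
exact: (Smul HS).
Qed.
Lemma induced_lmul A a x : S g1 a -> induced S A x -> induced S A (mul a x).
Proof.
move=> Ha; apply: (induced_ind (P := fun x => induced S A (mul a x))).
- by rewrite m0r //; apply: induced_0.
- by move=> u v Hu Hv; rewrite mDr //; apply: induced_add.
move=> g s Ag Sg; apply: (induced_single (g := g)) => //.
by rewrite -(g1l HG g); apply: (Smul HS).
Qed.

Lemma joins_mono (E E' : T -> Prop) x : (forall y, E y -> E' y) -> joins mul E x -> joins mul E' x.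
Proof. move=> HE; elim => [y Hy|a b _ Ha _ Hb]; [apply: joins_base; auto|exact: joins_join]. Qed.
Lemma joins_idem (E : T -> Prop) x : joins mul (joins mul E) x -> joins mul E x.
Proof. elim => [y Hy|a b _ Ha _ Hb] //; exact: joins_join. Qed.

Variable N : G -> Prop.
Hypothesis HN : normal_subgroup gmul ginv g1 N.
Variable C : G -> Prop.
Hypothesis HC : is_coset gmul ginv N C.

Local Notation J := (prodset mul (induced S C) (induced S (setinv ginv C))).
Definition Pc x := exists g, C g /\ is_identity_of mul (I g) x.

Lemma Pc_CI x : joins mul Pc x -> CI g1 mul S x.
Proof.
elim => [y [g [_ Hy]]|a b _ Ha _ Hb]; first exact (eps_CI HG Hmul HS Hy).
by case: (cjoin_CI HG Hmul HS Ha Hb).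
Qed.

Lemma Pc_J x : joins mul Pc x -> J x.
Proof.
elim => [y [g [Cg [Hy _]]]|a b Ja IHa Jb IHb].
  apply: prodset_mono Hy => u Hu.
    exact: (induced_single (g := g)).
  apply: (induced_single (g := ginv g)) => //.
  by rewrite /setinv (ginvK HG).
have [Sa _] := Pc_CI Ja.
rewrite /cjoin; apply: prodset_add; first exact: (prodset_add IHa IHb).
apply: (prodset_opp Hmul); first by move=> z; apply: induced_opp.
move: IHb; apply: (prodset_ind (P := fun x => J (mul a x))).
- by rewrite m0r //; apply: prodset_0.
- by move=> u v Hu Hv; rewrite mDr //; apply: prodset_add.
move=> u v Hu Hv; rewrite mA //; apply: prodset_mul => //.
exact: induced_lmul.
Qed.

Lemma Pc_max : exists E, joins mul Pc E /\ forall y, joins mul Pc y -> le mul y E.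
Proof.
have [g0 Cg0] : exists g, C g.
  by case: HC => g ->; exists g; rewrite (gVl HG); apply: N1 HN.
have [e0 He0] := Sid HS g0.
have [L HL] := Sfin HS.
suff [E [HE HEL]] : exists E, joins mul Pc E /\ forall y, y \in L -> joins mul Pc y -> le mul y E.
  exists E; split => // y Hy; apply: HEL => //; apply: HL.
  apply: joins_mono Hy => z [g [_ Hz]]; by exists g.
elim: L {HL} => [|y L [E [HE HEL]]].
  by exists e0; split => //; apply: joins_base; exists g0.
case: (classic (joins mul Pc y)) => Hy.
  exists (cjoin mul y E); split; first exact: joins_join.
  have [_ h1 h2] := cjoin_CI HG Hmul HS (Pc_CI Hy) (Pc_CI HE).
  move=> z; rewrite inE => /orP [/eqP -> _|zL Hz]; first exact: h1.
  by apply: le_trans (HEL z zL Hz) _.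
exists E; split => // z; rewrite inE => /orP [/eqP -> //|zL Hz]; exact: HEL.
Qed.

Lemma J_identity : exists E, joins mul Pc E /\ is_identity_of mul J E.
Proof.
have [E [HE Hmax]] := Pc_max.
exists E; split => //; split; first exact: Pc_J.
have [SE [_ cE]] := Pc_CI HE.
move=> x; apply: (prodset_ind (P := fun x => mul E x = x /\ mul x E = x)).
- by rewrite m0l // m0r.
- by move=> u v [h1 h2] [h3 h4]; rewrite mDl // mDr // h1 h2 h3 h4.
move=> s t Hs Ht; split.
  rewrite mA //; congr (mul _ t).
  move: Hs; apply: (induced_ind (P := fun s => mul E s = s)).
  - exact: m0r.
  - by move=> u v h1 h2; rewrite mDr // h1 h2.
  move=> g u Cg Su.
  have [e He] := Sid HS g.
  have hle : le mul e E by apply: Hmax; apply: joins_base; exists g.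
  by rewrite -(F1 Hmul HS He Su) mA // hle.
rewrite -mA //; congr (mul s _).
move: Ht; apply: (induced_ind (P := fun t => mul t E = t)).
- exact: m0l.
- by move=> u v h1 h2; rewrite mDl // h1 h2.
move=> h u Ch Su.
have [e He] := Sid HS (ginv h).
have hle : le mul e E by apply: Hmax; apply: joins_base; exists (ginv h).
have [Se [_ ce]] := eps_CI HG Hmul HS He.
by rewrite -(F2 HG Hmul HS He Su) -mA // ce // hle.
Qed.

End Ind.
Set Implicit Arguments. Unset Strict Implicit. Unset Printing Implicit Defensive.

Definition pb (P : Prop) : bool := if excluded_middle_informative P then true else false.
Lemma pbP (P : Prop) : reflect P (pb P).
Proof. rewrite /pb; case: excluded_middle_informative => h; constructor => //. Qed.
Definition geqG (G : Type) (a b : G) : bool := pb (a = b).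
Lemma geqGP (G : Type) (a b : G) : reflect (a = b) (geqG a b).
Proof. exact: pbP. Qed.
Lemma geqG_refl (G : Type) (a : G) : geqG a a.
Proof. by apply/geqGP. Qed.

Lemma In_filter (I : Type) (P : pred I) (l : seq I) x :
  List.In x (filter P l) <-> List.In x l /\ P x.
Proof.
elim: l => [|y l IH] /=; first by split => // [[]].
case Py: (P y) => /=; rewrite IH; split.
- by case => [<-|[]]; auto.
- by case => [[<-|h] h2]; auto.
- by case => h1 h2; split; auto.
- by case => [[<-|h] h2]; [rewrite Py in h2|split].
Qed.

Lemma Forall_filter (I : Type) (Q : I -> Prop) (P : pred I) (l : seq I) :
  List.Forall Q l -> List.Forall (fun x => Q x /\ P x) (filter P l).
Proof.
move=> /List.Forall_forall H; apply/List.Forall_forall => x /In_filter [h1 h2]; auto.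
Qed.

Lemma NoDup_filter (A B : Type) (P : pred (A * B)) (l : seq (A * B)) :
  List.NoDup (map fst l) -> List.NoDup (map fst (filter P l)).
Proof.
elim: l => [|p l IH] //= /List.NoDup_cons_iff [h1 h2].
case: (P p) => /=; last exact: IH.
constructor; last exact: IH.
move/List.in_map_iff => [q [hq /In_filter [hq2 _]]]; apply: h1.
by apply/List.in_map_iff; exists q.
Qed.

Section Sums.
Variable T : zmodType.

Lemma sum_split (I : Type) (l : seq I) (a : pred I) (F : I -> T) :
  \sum_(i <- l) F i = \sum_(i <- l | a i) F i + \sum_(i <- l | ~~ a i) F i.
Proof.
elim: l => [|i l IH]; first by rewrite !big_nil addr0.
rewrite !big_cons IH; case: (a i) => /=; first by rewrite addrA.
by rewrite addrCA.
Qed.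

Lemma sum_false (I : Type) (l : seq I) (P : pred I) (F : I -> T) :
  (forall q, List.In q l -> P q = false) -> \sum_(q <- l | P q) F q = 0.
Proof.
elim: l => [|i l IH] H; first by rewrite big_nil.
rewrite big_cons H; last by left.
by apply: IH => q hq; apply: H; right.
Qed.

Lemma sum_true (I : Type) (l : seq I) (P : pred I) (F : I -> T) :
  (forall q, List.In q l -> P q = true) -> \sum_(q <- l | P q) F q = \sum_(q <- l) F q.
Proof.
elim: l => [|i l IH] H; first by rewrite !big_nil.
rewrite !big_cons H; last by left.
by rewrite IH // => q hq; apply: H; right.
Qed.
End Sums.

Section Merge.
Variable G : Type.
Variable gmul : G -> G -> G.
Variable ginv : G -> G.
Variable T : zmodType.
Variable mul : T -> T -> T.
Variable S : G -> T -> Prop.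
Hypothesis HS : epsilon_finite mul gmul ginv (fun _ => True) S.

Definition sumf (L : seq (G * T)) (g : G) := \sum_(p <- L | geqG p.1 g) p.2.

Lemma mergeL (L : seq (G * T)) : List.Forall (fun p => S p.1 p.2) L ->
  exists L', List.Forall (fun p => True /\ S p.1 p.2) L' /\ List.NoDup (map fst L') /\
    \sum_(p <- L') p.2 = \sum_(p <- L) p.2 /\ forall g, sumf L' g = sumf L g.
Proof.
elim: L => [|[k s] L0 IH] HF.
  by exists [::]; split => //; split => //; constructor.
inversion HF as [|x l Hks HL0]; subst.
have [L0' [HF' [HN' [Hs' Hf']]]] := IH HL0.
set R := [seq p <- L0' | ~~ geqG p.1 k].
have Sk : S k (sumf L0' k).
  rewrite /sumf -big_filter.
  apply: (S_sum HS (Q := fun p => (True /\ S p.1 p.2) /\ geqG p.1 k)); last exact: Forall_filter.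
  by move=> [g t] [[_ h] /geqGP /= <-].
exists ((k, s + sumf L0' k) :: R); split; [|split; [|split]].
- constructor; first by split => //; apply: (Sadd HS).
  have := Forall_filter (fun p : G * T => ~~ geqG p.1 k) HF'.
  by apply: List.Forall_impl => p [].
- rewrite /=; constructor; last exact: NoDup_filter.
  move/List.in_map_iff => [q [hq /In_filter [_ hq2]]].
  by move: hq2; rewrite /= hq geqG_refl.
- rewrite !big_cons /= -addrA; congr (_ + _).
  rewrite big_filter -Hs' (sum_split _ (fun p : G * T => geqG p.1 k)) //.
- move=> g; rewrite /sumf !big_cons /= big_filter_cond.
  case: (geqGP k g) => [<-|nkg].
    rewrite -addrA; congr (_ + _).
    rewrite (@big_pred0 _ _ _ _ _ (fun p : G * T => ~~ geqG p.1 k && geqG p.1 k)); last first.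
      by move=> p; case: (geqG p.1 k).
    by rewrite addr0; apply: Hf'.
  transitivity (sumf L0' g); last exact: Hf'.
  apply: eq_bigl => p /=.
  case: (geqGP p.1 g) => [->|]; last by rewrite andbF.
  by case: (geqGP g k) => // h; case: nkg.
Qed.

Lemma allzero n (L : seq (G * T)) : (size L <= n)%N -> (forall g, sumf L g = 0) ->
  \sum_(p <- L) p.2 = 0.
Proof.
elim: n L => [|n IH] [|[k s] L0] //= Hn Hz; rewrite ?big_nil //.
rewrite (sum_split _ (fun p : G * T => geqG p.1 k)).
have -> : \sum_(p <- (k, s) :: L0 | geqG p.1 k) p.2 = 0 by apply: (Hz k).
rewrite add0r -big_filter /= geqG_refl /=.
apply: IH.
  by rewrite size_filter; apply: leq_trans (count_size _ _) _; rewrite -ltnS.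
move=> g; rewrite /sumf big_filter_cond.
case: (geqGP k g) => [<-|nkg].
  apply: big_pred0 => p; by case: (geqG p.1 k).
transitivity (sumf ((k, s) :: L0) g); last exact: Hz g.
rewrite /sumf big_cons /=.
case: (geqGP k g) => // _.
apply: eq_bigl => p /=.
case: (geqGP p.1 g) => [->|]; last by rewrite andbF.
by case: (geqGP g k) => // h; case: nkg.
Qed.

Lemma zero_sumf (L : seq (G * T)) : List.Forall (fun p => S p.1 p.2) L ->
  \sum_(p <- L) p.2 = 0 -> forall g, sumf L g = 0.
Proof.
move=> HF Hz g.
have [L' [HF' [HN' [Hs' Hf']]]] := mergeL HF.
have Z := Sind HS HF' HN' (etrans Hs' Hz).
rewrite -Hf' /sumf -big_filter.
apply: (Forall_sum_ind (P := fun x : T => x = 0) (Q := fun p : G * T => p.2 = 0 /\ geqG p.1 g)) => //.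
- by move=> x y -> ->; rewrite addr0.
- by move=> i [].
- exact: Forall_filter.
Qed.
End Merge.
Set Implicit Arguments. Unset Strict Implicit. Unset Printing Implicit Defensive.

Section Indep.
Variable G : Type.
Variable gmul : G -> G -> G.
Variable ginv : G -> G.
Variable g1 : G.
Hypothesis HG : is_group gmul ginv g1.
Variable T : zmodType.
Variable mul : T -> T -> T.
Variable S : G -> T -> Prop.
Hypothesis HS : epsilon_finite mul gmul ginv (fun _ => True) S.
Variable N : G -> Prop.
Hypothesis HN : normal_subgroup gmul ginv g1 N.

Lemma build (l : seq ((G -> Prop) * T)) :
  List.Forall (fun p => is_coset gmul ginv N p.1 /\ induced S p.1 p.2) l ->
  List.NoDup (map fst l) ->
  exists L : seq (G * T), List.Forall (fun q => S q.1 q.2) L /\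
    (forall q, List.In q L -> exists p, List.In p l /\ p.1 q.1) /\
    \sum_(q <- L) q.2 = \sum_(p <- l) p.2 /\
    forall p, List.In p l -> p.2 = \sum_(q <- L | pb (p.1 q.1)) q.2.
Proof.
elim: l => [|p0 l0 IH] HF HND.
  by exists [::]; split => //; split => //; rewrite !big_nil.
inversion HF as [|x y [Cp0 [lp0 [Hlp0 Ep0]]] HF0]; subst.
move: HND => /= /List.NoDup_cons_iff [Hn0 HND0].
have [L0 [HL0 [HinL0 [HsL0 HpL0]]]] := IH HF0 HND0.
have Hlp0' := proj1 (List.Forall_forall _ _) Hlp0.
have HF0' := proj1 (List.Forall_forall _ _) HF0.
exists (lp0 ++ L0); split; [|split; [|split]].
- apply/List.Forall_app; split => //.
  by apply: List.Forall_impl Hlp0 => q [].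
- move=> q hq; case: (List.in_app_or _ _ _ hq) => {hq} hq.
    by exists p0; split; [left|case: (Hlp0' q hq)].
  by have [p [hp hpq]] := HinL0 q hq; exists p; split; [right|].
- by rewrite big_cat big_cons HsL0 /= Ep0.
move=> p [<-|hp].
  rewrite big_cat (sum_true (l := lp0)); last first.
    by move=> q hq; apply/pbP; case: (Hlp0' q hq).
  rewrite (sum_false (l := L0)); first by rewrite Ep0; exact: esym (addr0 _).
  move=> q hq; apply/pbP => hc.
  have [p1 [hp1 hpq]] := HinL0 q hq.
  have e := coset_disj HG HN Cp0 (HF0' p1 hp1).1 hc hpq.
  by apply: Hn0; rewrite e; apply/List.in_map_iff; exists p1.
rewrite big_cat (sum_false (l := lp0)); first by rewrite (HpL0 p hp); exact: esym (add0r _).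
move=> q hq; apply/pbP => hc.
have [hq0 _] := Hlp0' q hq.
have e := coset_disj HG HN Cp0 (HF0' p hp).1 hq0 hc.
by apply: Hn0; rewrite e; apply/List.in_map_iff; exists p.
Qed.

Lemma coset_indep (l : seq ((G -> Prop) * T)) :
  List.Forall (fun p => is_coset gmul ginv N p.1 /\ induced S p.1 p.2) l ->
  List.NoDup (map fst l) ->
  \sum_(p <- l) p.2 = 0 -> List.Forall (fun p => p.2 = 0) l.
Proof.
move=> HF HND Hz.
have [L [HL [_ [HsL HpL]]]] := build HF HND.
have Zf := zero_sumf HS HL (etrans HsL Hz).
apply/List.Forall_forall => p hp.
rewrite (HpL p hp) -big_filter.
apply: (@allzero _ _ (size (filter (fun q : G * T => pb (p.1 q.1)) L))) => // g.
rewrite /sumf big_filter_cond.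
case: (pbP (p.1 g)) => hg.
  transitivity (sumf L g); last exact: Zf g.
  apply: eq_bigl => q /=.
  case: (geqGP q.1 g) => [->|]; last by rewrite andbF.
  by rewrite andbT; apply/pbP.
apply: big_pred0 => q.
case: (geqGP q.1 g) => [->|]; last by rewrite andbF.
by rewrite andbT; apply/pbP.
Qed.
End Indep.
Set Implicit Arguments. Unset Strict Implicit. Unset Printing Implicit Defensive.

Theorem proposition6p3 (G : Type) (gmul : G -> G -> G) (ginv : G -> G) (g1 : G)
  (HG : is_group gmul ginv g1)
  (T : zmodType) (mul : T -> T -> T) (Hmul : is_ring_mul mul)
  (S : G -> T -> Prop)
  (HS : epsilon_finite mul gmul ginv (fun _ => True) S) :
  forall N : G -> Prop, normal_subgroup gmul ginv g1 N ->
    epsilon_finite mul (setmul gmul) (setinv ginv) (is_coset gmul ginv N)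
      (induced S).
Proof.
move=> N HN.
have [L HL] := Sfin HS.
have Jid := fun C (HC : is_coset gmul ginv N C) => J_identity HG Hmul HS HN HC.
split; last first.
  exists L => x Hx; apply: HL; apply: joins_idem.
  apply: joins_mono Hx => y [C [HC Hy]].
  have [E [HE HEid]] := Jid C HC.
  rewrite (ident_uniq Hy HEid).
  by apply: joins_mono HE => z [g [_ Hz]]; exists g.
split.
  split; [|split; [|split]].
  - move=> C HC; split; first exact: induced_0.
    by move=> x y Hx Hy; apply: induced_add => //; apply: (induced_opp HS).
  - move=> s; have [l0 [Hl0 ->]] := Sdec HS s.
    exists (map (fun p => ((fun x => N (gmul (ginv p.1) x)), p.2)) l0).
    split; last by rewrite big_map.
    elim: l0 Hl0 => [|p l IH] H; first by constructor.
    inversion H as [|x y [_ Hp] Hl]; subst.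
    constructor; last by apply: IH.
    split; first by exists p.1.
    apply: (induced_single (g := p.1)) => //=.
    by rewrite (gVl HG); apply: (N1 HN).
  - by move=> l HF HND Hz; apply: (coset_indep HG HS HN).
  - by move=> C D x y _ _ Hx Hy; apply: (induced_mul Hmul HS).
move=> C HC; split; last by have [E [_ HE]] := Jid C HC; exists E.
move=> x; split.
  case: (HC) => g Cdef.
  apply: (prodset_ind (P := induced S C)); [exact: induced_0|exact: induced_add|].
  move=> a b Ha Hb; move: Ha.
  apply: (prodset_ind (P := fun a => induced S C (mul a b))).
  - by rewrite m0l //; apply: induced_0.
  - by move=> u v Hu Hv; rewrite mDl //; apply: induced_add.
  move=> s t Hs Ht.
  have := induced_mul Hmul HS (induced_mul Hmul HS Hs Ht) Hb.
  apply: induced_mono => z [a' [c [[a1 [b' [Ca [Cb ->]]]] [Cc ->]]]].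
  rewrite /setinv Cdef /= in Ca Cb Cc *.
  exact: (coset_triple HG HN Ca Cb Cc).
apply: (induced_ind (P := prodset mul (prodset mul (induced S C) (induced S (setinv ginv C))) (induced S C))).
- exact: prodset_0.
- exact: prodset_add.
move=> g s Cg Sg.
have := (Sstrong HS g s).2 Sg.
apply: prodset_mono => [u|u]; last exact: (induced_single (g := g)).
apply: prodset_mono => [v|v]; first exact: (induced_single (g := g)).
by apply: (induced_single (g := ginv g)) => //; rewrite /setinv (ginvK HG).
Qed.
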